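(* Let $\mathcal X$, $\mathbf f$, $\mathbf M$, $\mathbf B_j$, $\mathbf H_j$, $\Phi$, $\Xi$, $\tilde{\mathcal X}$, $\tilde{\mathbf f}$, $\tilde{\mathbf M}$ and $\Phi_A$ be as in the context. Let $\tilde{\xi}^*:\tilde{\mathcal X}\to[0,\infty)$ be a solution of the optimization problem $$\min \Phi_A(\tilde{\xi})$$ over all designs $\tilde\xi:\tilde{\mathcal X}\to[0,\infty)$ subject to (i) $\tilde{\xi}(j,x)=\tilde{\xi}(1,x)$ for all $x\in\mathcal X$ and all $j=2,\ldots,s$; (ii) $\tilde{\xi}(y)=1$ for all $y\in\tilde{\mathcal Y}_j$ and all $j=1,\ldots,s$; (iii) the design $\tilde{\xi}(1,\cdot): x\mapsto\tilde\xi(1,x)$ on $\mathcal X$ belongs to $\Xi$. Then $\tilde{\xi}^*(1,\cdot)$ is a CBR-optimal design in the class $\Xi$, i.e. $\tilde{\xi}^*(1,\cdot)\in\Xi$ and $\Phi(\tilde{\xi}^*(1,\cdot))\le\Phi(\xi)$ for all $\xi\in\Xi$.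
   Context: Let $\mathcal X$ be a finite set (design space) and $\mathbf f:\mathcal X\to\mathbb R^p$ with $\mathrm{span}\{\mathbf f(x):x\in\mathcal X\}=\mathbb R^p$. A design on $\mathcal X$ is a map $\xi:\mathcal X\to[0,\infty)$ (exact designs take values in $\{0,1,2,\dots\}$). Its information matrix is $\mathbf M(\xi)=\sum_{x\in\mathcal X}\xi(x)\mathbf f(x)\mathbf f(x)^\top$. Let $s\ge1$, let $\mathbf B_1,\ldots,\mathbf B_s$ be symmetric non-negative definite $p\times p$ matrices and $\mathbf H_1,\ldots,\mathbf H_s$ symmetric positive definite $p\times p$ matrices. The compound Bayes risk criterion (CBRC) is $\Phi(\xi)=\sum_{j=1}^s\mathrm{tr}\big((\mathbf M(\xi)+\mathbf B_j)^{-1}\mathbf H_j\big)$ if all $\mathbf M(\xi)+\mathbf B_j$ are non-singular, and $\Phi(\xi)=+\infty$ otherwise. Let $\Xi\subseteq[0,\infty)^{\mathcal X}$ be a set of permissible designs containing at least one $\xi$ with $\Phi(\xi)<+\infty$. Artificial model: let $r_j=\mathrm{rank}(\mathbf B_j)$, let $\tilde{\mathcal Y}_j=\{y^{(j)}_1,\ldots,y^{(j)}_{r_j}\}$ be auxiliary sets and $\tilde{\mathcal X}_j=\{j\}\times\mathcal X$, chosen so that $\tilde{\mathcal X}_1,\ldots,\tilde{\mathcal X}_s,\tilde{\mathcal Y}_1,\ldots,\tilde{\mathcal Y}_s$ are pairwise disjoint; set $\tilde{\mathcal X}=\bigcup_{j=1}^s(\tilde{\mathcal X}_j\cup\tilde{\mathcal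 Y}_j)$. For each $j$ choose $\mathbf K_j\in\mathbb R^{p\times p}$ with $\mathbf H_j=\mathbf K_j\mathbf K_j^\top$ (so $\mathbf K_j$ is non-singular), set $\tilde{\mathbf f}_j(x)=\mathbf K_j^{-1}\mathbf f(x)$ for $x\in\mathcal X$, and choose vectors $\mathbf u_j(y^{(j)}_k)\in\mathbb R^p$, $k=1,\ldots,r_j$, with $\mathbf K_j^{-1}\mathbf B_j\mathbf K_j^{-\top}=\sum_{k=1}^{r_j}\mathbf u_j(y^{(j)}_k)\mathbf u_j(y^{(j)}_k)^\top$. Define $\tilde{\mathbf f}:\tilde{\mathcal X}\to\mathbb R^{sp}$ by: $\tilde{\mathbf f}((j,x))$ is the vector whose $j$-th block of $p$ coordinates equals $\tilde{\mathbf f}_j(x)$ and all other coordinates are $0$; for $y\in\tilde{\mathcal Y}_j$, $\tilde{\mathbf f}(y)$ is the vector whose $j$-th block of $p$ coordinates equals $\mathbf u_j(y)$ and all other coordinates are $0$. For a design $\tilde\xi:\tilde{\mathcal X}\to[0,\infty)$ let $\tilde{\mathbf M}(\tilde\xi)=\sum_{\tilde x\in\tilde{\mathcal X}}\tilde\xi(\tilde x)\tilde{\mathbf f}(\tilde x)\tilde{\mathbf f}(\tilde x)^\top$, and let $\Phi_A(\tilde\xi)=\mathrm{tr}(\tilde{\mathbf M}(\tilde\xi)^{-1})$ if $\tilde{\mathbf M}(\tilde\xi)$ is non-singular and $\Phi_A(\tilde\xi)=+\infty$ otherwise ($A$-optimality criterion). *)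

(* Defs.v *)
From HB Require Import structures.
From mathcomp Require Import all_boot all_order all_algebra.
Set Implicit Arguments. Unset Strict Implicit. Unset Printing Implicit Defensive.
Import Order.TTheory GRing.Theory Num.Theory.
Local Open Scope ring_scope.

(* Extended reals [0,+oo]-style values: None = +infinity. *)
Definition le_ext (R : numDomainType) (a b : option R) : Prop :=
  match a, b with
  | _, None => True
  | None, Some _ => False
  | Some x, Some y => x <= y
  end.

Definition nnd (R : numDomainType) p (A : 'M[R]_p) : Prop :=
  A^T = A /\ forall v : 'cV[R]_p, 0 <= (v^T *m A *m v) 0 0.
Definition pd (R : numDomainType) p (A : 'M[R]_p) : Prop :=
  A^T = A /\ forall v : 'cV[R]_p, v != 0 -> 0 < (v^T *m A *m v) 0 0.

Definition infoM (R : numDomainType) (X : finType) p (f : X -> 'cV[R]_p)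
  (xi : {ffun X -> R}) : 'M[R]_p :=
  \sum_(x : X) xi x *: (f x *m (f x)^T).

(* compound Bayes risk criterion; None = +infinity *)
Definition CBRC (R : numFieldType) (X : finType) p s (f : X -> 'cV[R]_p)
  (B H : 'I_s -> 'M[R]_p) (xi : {ffun X -> R}) : option R :=
  if [forall j, infoM f xi + B j \in unitmx]
  then Some (\sum_(j < s) \tr (invmx (infoM f xi + B j) *m H j))
  else None.

(* artificial design space: disjoint union of {j} x X (j < s) and Y_j = 'I_(r j) *)
Definition artX s (r : 'I_s -> nat) (X : finType) : finType :=
  (('I_s * X) + {j : 'I_s & 'I_(r j)})%type.

(* vector in R^{sp} whose j-th block of p coordinates is v, others 0 *)
Definition blockv (R : numDomainType) s p (j : 'I_s) (v : 'cV[R]_p) : 'cV[R]_(s * p) :=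
  (mxvec (\matrix_(i < s, k < p) (if i == j then v k 0 else 0)))^T.

Definition artf (R : numFieldType) (X : finType) p s (r : 'I_s -> nat)
  (f : X -> 'cV[R]_p) (K : 'I_s -> 'M[R]_p) (u : forall j, 'I_(r j) -> 'cV[R]_p)
  (t : artX r X) : 'cV[R]_(s * p) :=
  match t with
  | inl (j, x) => blockv j (invmx (K j) *m f x)
  | inr (existT j y) => blockv j (u j y)
  end.

Definition PhiA (R : numFieldType) (T : finType) n (g : T -> 'cV[R]_n)
  (xi : {ffun T -> R}) : option R :=
  if infoM g xi \in unitmx then Some (\tr (invmx (infoM g xi))) else None.

(* the design x |-> xi(1, x)  (index 1 is the ordinal 0) *)
Definition first_design s (r : 'I_s -> nat) (X : finType) (R : numDomainType)
  (hs : (0 < s)%N) (xi : {ffun artX r X -> R}) : {ffun X -> R} :=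
  [ffun x => xi (inl (Ordinal hs, x))].

(* constraints (i)-(iii), plus nonnegativity of the design *)
Definition artFeasible s (r : 'I_s -> nat) (X : finType) (R : numDomainType)
  (hs : (0 < s)%N) (Xi : {ffun X -> R} -> Prop) (xi : {ffun artX r X -> R}) : Prop :=
  [/\ forall t, 0 <= xi t,
      forall (j : 'I_s) (x : X), xi (inl (j, x)) = xi (inl (Ordinal hs, x)),
      forall (j : 'I_s) (y : 'I_(r j)), xi (inr (existT _ j y)) = 1
    & Xi (first_design hs xi)].

(* Main.v *)
Require Import Defs.
From HB Require Import structures.
From mathcomp Require Import all_boot all_order all_algebra.
Import Order.TTheory GRing.Theory Num.Theory.
Set Implicit Arguments. Unset Strict Implicit. Unset Printing Implicit Defensive.
Local Open Scope ring_scope.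

Lemma idx_eq m n (i j : 'I_m) (k b : 'I_n) :
  (mxvec_index i k == mxvec_index j b) = (i == j) && (k == b).
Proof.
by rewrite /mxvec_index (inj_eq (@cast_ord_inj _ _ _)) (inj_eq (@enum_rank_inj _)).
Qed.

Definition Pm {R : numFieldType} {s} p (j : 'I_s) : 'M[R]_(s * p, p) :=
  \matrix_(a, b) ((a == mxvec_index j b)%:R).

Lemma blockvE (R : numFieldType) s p (j : 'I_s) (v : 'cV[R]_p) :
  blockv j v = Pm p j *m v.
Proof.
apply/matrixP => a c; rewrite (ord1 c) {c}.
case: (mxvec_indexP a) => i k.
rewrite /blockv !mxE mxvecE mxE.
rewrite (bigD1 k) //= big1 ?addr0; last first.
  by move=> b nb; rewrite mxE idx_eq (eq_sym k) (negbTE nb) andbF mul0r.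
rewrite mxE idx_eq eqxx andbT.
by case: (i == j); rewrite ?mul1r ?mul0r.
Qed.

Lemma P_orth (R : numFieldType) s p (j k : 'I_s) :
  (Pm (R:=R) p j)^T *m Pm p k = if j == k then 1%:M else 0.
Proof.
apply/matrixP => b c; rewrite !mxE.
rewrite (bigD1 (mxvec_index j b)) //= big1 ?addr0; last first.
  by move=> a /negbTE na; rewrite !mxE na mul0r.
rewrite !mxE eqxx mul1r idx_eq.
case: (j == k); rewrite ?mxE //=.
Qed.

Lemma P_sum (R : numFieldType) s p :
  \sum_(j < s) Pm (R:=R) p j *m (Pm p j)^T = 1%:M.
Proof.
apply/matrixP => a a'; rewrite summxE.
case: (mxvec_indexP a) => i k.
rewrite (bigD1 i) //= big1 ?addr0; last first.
  move=> j /negbTE nj; rewrite mxE big1 // => b _.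
  by rewrite !mxE idx_eq (eq_sym i) nj mul0r.
rewrite mxE (bigD1 k) //= big1 ?addr0; last first.
  by move=> b nb; rewrite !mxE idx_eq (eq_sym k) (negbTE nb) andbF mul0r.
by rewrite !mxE idx_eq !eqxx mul1r eq_sym.
Qed.

Lemma Mt_P (R : numFieldType) s p (A : 'I_s -> 'M[R]_p) (j : 'I_s) :
  (\sum_k Pm p k *m A k *m (Pm p k)^T) *m Pm p j = Pm p j *m A j.
Proof.
rewrite mulmx_suml (bigD1 j) //= big1 ?addr0.
  by rewrite -mulmxA P_orth eqxx mulmx1.
by move=> k nk; rewrite -mulmxA P_orth (negbTE nk) mulmx0.
Qed.

Lemma block_unit (R : numFieldType) s p (A : 'I_s -> 'M[R]_p) :
  (\sum_k Pm p k *m A k *m (Pm p k)^T) \in unitmx -> forall j, A j \in unitmx.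
Proof.
move=> hM j; pose Mt := \sum_k Pm p k *m A k *m (Pm p k)^T; rewrite -/Mt in hM.
have : ((Pm p j)^T *m invmx Mt *m Pm p j) *m A j = 1%:M.
  by rewrite -mulmxA -Mt_P mulmxA -(mulmxA _ (invmx Mt)) mulVmx // mulmx1 P_orth eqxx.
by case/mulmx1_unit.
Qed.

Lemma block_inv (R : numFieldType) s p (A : 'I_s -> 'M[R]_p) :
  (forall j, A j \in unitmx) ->
  (\sum_k Pm p k *m A k *m (Pm p k)^T) *m
    (\sum_k Pm p k *m invmx (A k) *m (Pm p k)^T) = 1%:M.
Proof.
move=> hA; rewrite mulmx_sumr -(P_sum R s p); apply: eq_bigr => j _.
by rewrite !mulmxA Mt_P -(mulmxA (Pm p j)) mulmxV // mulmx1.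
Qed.

Lemma inv_uniq (R : numFieldType) n (A B : 'M[R]_n) : A *m B = 1%:M -> invmx A = B.
Proof.
move=> h; have [uA _] := mulmx1_unit h.
by rewrite -[invmx A]mulmx1 -h mulmxA mulVmx // mul1mx.
Qed.

Lemma block_tr (R : numFieldType) s p (C : 'I_s -> 'M[R]_p) :
  \tr (\sum_k Pm p k *m C k *m (Pm p k)^T) = \sum_k \tr (C k).
Proof.
rewrite raddf_sum; apply: eq_bigr => k _.
by rewrite /=; rewrite [LHS]mxtrace_mulC mulmxA P_orth eqxx mul1mx.
Qed.

Definition Aj (R : numFieldType) (X : finType) p s (r : 'I_s -> nat)
  (f : X -> 'cV[R]_p) (K : 'I_s -> 'M[R]_p) (u : forall j, 'I_(r j) -> 'cV[R]_p)
  (xi : {ffun artX r X -> R}) (j : 'I_s) : 'M[R]_p :=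
  \sum_x xi (inl (j, x)) *: ((invmx (K j) *m f x) *m (invmx (K j) *m f x)^T)
  + \sum_(y : 'I_(r j)) xi (inr (existT _ j y)) *: (u j y *m (u j y)^T).

Lemma blk_term (R : numFieldType) s p (j : 'I_s) (c : R) (g : 'cV[R]_p) :
  c *: (blockv j g *m (blockv j g)^T) = Pm p j *m (c *: (g *m g^T)) *m (Pm p j)^T.
Proof. by rewrite -scalemxAr -scalemxAl blockvE trmx_mul !mulmxA. Qed.

Lemma artM (R : numFieldType) (X : finType) p s (r : 'I_s -> nat)
  (f : X -> 'cV[R]_p) (K : 'I_s -> 'M[R]_p) (u : forall j, 'I_(r j) -> 'cV[R]_p)
  (xi : {ffun artX r X -> R}) :
  infoM (artf f K u) xi = \sum_j Pm p j *m Aj f K u xi j *m (Pm p j)^T.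
Proof.
rewrite /infoM big_sumType /=.
under [RHS]eq_bigr => j _ do rewrite /Aj mulmxDr mulmxDl.
rewrite big_split /=; congr (_ + _).
  symmetry; under eq_bigr => j _ do rewrite mulmx_sumr mulmx_suml.
  rewrite pair_bigA /=; apply: eq_bigr => -[j x] _ /=.
  by rewrite blk_term.
under [RHS]eq_bigr => j _ do rewrite mulmx_sumr mulmx_suml.
rewrite (sig_big_dep xpredT (fun _ => xpredT)) /=.
symmetry; apply: eq_bigr => -[j y] _ /=.
by rewrite blk_term.
Qed.

Lemma Aj_feas (R : numFieldType) (X : finType) p s (hs : (0 < s)%N) (r : 'I_s -> nat)
  (f : X -> 'cV[R]_p) (B K : 'I_s -> 'M[R]_p) (u : forall j, 'I_(r j) -> 'cV[R]_p)
  (xi : {ffun artX r X -> R})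
  (hu : forall j, invmx (K j) *m B j *m (invmx (K j))^T
                  = \sum_(k < r j) u j k *m (u j k)^T)
  (h1 : forall (j : 'I_s) (x : X), xi (inl (j, x)) = xi (inl (Ordinal hs, x)))
  (h2 : forall (j : 'I_s) (y : 'I_(r j)), xi (inr (existT _ j y)) = 1) j :
  Aj f K u xi j = invmx (K j) *m (infoM f (first_design hs xi) + B j) *m (invmx (K j))^T.
Proof.
rewrite /Aj mulmxDr mulmxDl hu; congr (_ + _).
  rewrite /infoM mulmx_sumr mulmx_suml; apply: eq_bigr => x _.
  by rewrite h1 ffunE trmx_mul -scalemxAr -scalemxAl !mulmxA.
by apply: eq_bigr => y _; rewrite h2 scale1r.
Qed.

Lemma PhiA_CBRC (R : numFieldType) (X : finType) p s (hs : (0 < s)%N) (r : 'I_s -> nat)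
  (f : X -> 'cV[R]_p) (B H K : 'I_s -> 'M[R]_p) (u : forall j, 'I_(r j) -> 'cV[R]_p)
  (xi : {ffun artX r X -> R})
  (hK : forall j, H j = K j *m (K j)^T) (hKu : forall j, K j \in unitmx)
  (hu : forall j, invmx (K j) *m B j *m (invmx (K j))^T
                  = \sum_(k < r j) u j k *m (u j k)^T)
  (h1 : forall (j : 'I_s) (x : X), xi (inl (j, x)) = xi (inl (Ordinal hs, x)))
  (h2 : forall (j : 'I_s) (y : 'I_(r j)), xi (inr (existT _ j y)) = 1) :
  PhiA (artf f K u) xi = CBRC f B H (first_design hs xi).
Proof.
rewrite /PhiA /CBRC artM.
set M := infoM f (first_design hs xi).
have EA j := @Aj_feas _ _ _ _ hs _ f B K u xi hu h1 h2 j.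
have UA : forall j, (Aj f K u xi j \in unitmx) = (M + B j \in unitmx).
  by move=> j; rewrite EA !unitmx_mul unitmx_tr unitmx_inv hKu /= andbT.
case: (boolP [forall j, M + B j \in unitmx]) => [/forallP hall | hn].
  have hA : forall j, Aj f K u xi j \in unitmx by move=> j; rewrite UA.
  have hI := block_inv hA.
  have [-> _] := mulmx1_unit hI.
  rewrite (inv_uniq hI) block_tr; congr Some; apply: eq_bigr => j _.
  have hC := hall j.
  have -> : invmx (Aj f K u xi j) = (K j)^T *m invmx (M + B j) *m K j.
    apply: inv_uniq; rewrite EA.
    have e1 : (invmx (K j))^T *m (K j)^T = 1%:M.
      by rewrite -trmx_mul mulmxV // trmx1.
    rewrite !mulmxA -(mulmxA _ _ (K j)^T) e1 mulmx1.
    by rewrite -(mulmxA _ _ (invmx (M + B j))) mulmxV // mulmx1 mulVmx.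
  by rewrite mxtrace_mulC mulmxA -hK mxtrace_mulC.
move: hn; rewrite negb_forall => /existsP [j hj].
case: ifP => // hMt.
by have := block_unit hMt j; rewrite UA (negbTE hj).
Qed.

Lemma K_unit (R : realFieldType) p (H K : 'M[R]_p) : pd H -> H = K *m K^T -> K \in unitmx.
Proof.
move=> [_ hpos] hK; apply/negPn/negP => nK.
have hk : kermx K != 0 by rewrite kermx_eq0 row_free_unit.
case: (boolP [exists i, row i (kermx K) != 0]) => [/existsP [i hi] | /existsPn h].
  2: { exfalso; move/negP: hk; apply; apply/eqP; apply/row_matrixP => i.
       by rewrite row0; apply/eqP; move: (h i); rewrite negbK. }
have wK : row i (kermx K) *m K = 0 by rewrite -row_mul mulmx_ker row0.
have := hpos (row i (kermx K))^T; rewrite trmx_eq0 hi => /(_ isT).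
by rewrite trmxK hK mulmxA wK !mul0mx mxE ltxx.
Qed.

Theorem theorem1 (R : realFieldType) (X : finType) (p s : nat) (hs : (0 < s)%N)
  (f : X -> 'cV[R]_p)
  (hspan : ((1%:M : 'M[R]_p) <= \sum_(x : X) <<(f x)^T>>)%MS)
  (B H : 'I_s -> 'M[R]_p)
  (hB : forall j, nnd (B j)) (hH : forall j, pd (H j))
  (Xi : {ffun X -> R} -> Prop)
  (hXi_nn : forall xi, Xi xi -> forall x, 0 <= xi x)
  (hXi_fin : exists xi, Xi xi /\ CBRC f B H xi <> None)
  (K : 'I_s -> 'M[R]_p) (hK : forall j, H j = K j *m (K j)^T)
  (u : forall j : 'I_s, 'I_(\rank (B j)) -> 'cV[R]_p)
  (hu : forall j, invmx (K j) *m B j *m (invmx (K j))^T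
                  = \sum_(k < \rank (B j)) u j k *m (u j k)^T)
  (xi_star : {ffun artX (fun j => \rank (B j)) X -> R})
  (hfeas : artFeasible hs Xi xi_star)
  (hopt : forall xi, artFeasible hs Xi xi ->
            le_ext (PhiA (artf f K u) xi_star) (PhiA (artf f K u) xi)) :
  Xi (first_design hs xi_star) /\
  forall xi, Xi xi -> le_ext (CBRC f B H (first_design hs xi_star)) (CBRC f B H xi).
Proof.
have hKu j : K j \in unitmx := K_unit (hH j) (hK j).
case: (hfeas) => hnn h1 h2 hX.
split => // xi hxi.
pose xi' : {ffun artX (fun j => \rank (B j)) X -> R} :=
  [ffun t => match t with inl (j, x) => xi x | inr _ => 1 end].
have e : first_design hs xi' = xi by apply/ffunP => x; rewrite !ffunE.
have h1' : forall (j : 'I_s) (x : X), xi' (inl (j, x)) = xi' (inl (Ordinal hs, x)).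
  by move=> j x; rewrite !ffunE.
have h2' : forall (j : 'I_s) (y : 'I_(\rank (B j))), xi' (inr (existT _ j y)) = 1.
  by move=> j y; rewrite ffunE.
have hf' : artFeasible hs Xi xi'.
  split => //; last by rewrite e.
  by case => [[j x]|[j y]]; rewrite ffunE //; exact: hXi_nn.
have := hopt _ hf'.
rewrite (@PhiA_CBRC _ _ _ _ hs _ f B H K u xi_star hK hKu hu h1 h2).
by rewrite (@PhiA_CBRC _ _ _ _ hs _ f B H K u xi' hK hKu hu h1' h2') e.
Qed.
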